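(* Let $G$ be a simple, undirected, connected graph on $N\ge 2$ vertices with edge set $E$ and degrees $d_i$, and let $$\sigma^2=\frac{2}{N}\sum_{(i,j)\in E}\frac{1}{d_id_j}=\frac{\mathrm{tr}(P^2)}{N},\qquad \sigma\ge 0.$$ Then $$R^+(G)\ge N\left[\frac{1}{1+\frac{\sigma}{\sqrt{N-1}}}+\frac{(N-2)^2}{N-1-\frac{\sigma}{\sqrt{N-1}}}\right]+(N-1)^2.$$
   Context: $P=(p(v,w))$ is the $N\times N$ transition matrix of the simple random walk on $G$: $p(v,w)=1/d_v$ if $v,w$ are adjacent and $0$ otherwise. For vertices $i,j$, $R_{ij}$ denotes the effective resistance between $i$ and $j$ when every edge is a unit resistor. The additive degree-Kirchhoff index is $R^+(G)=\sum_{i<j}(d_i+d_j)R_{ij}$. *)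

(* Defs.v *)
From HB Require Import structures.
From mathcomp Require Import all_boot all_order all_algebra.
Set Implicit Arguments. Unset Strict Implicit. Unset Printing Implicit Defensive.
Import Order.TTheory GRing.Theory Num.Theory.
Local Open Scope ring_scope.

Definition simple_graph (n : nat) (e : rel 'I_n) : Prop :=
  symmetric e /\ irreflexive e.

Definition connected_graph (n : nat) (e : rel 'I_n) : Prop :=
  forall x y : 'I_n, connect e x y.

Definition deg (n : nat) (e : rel 'I_n) (v : 'I_n) : nat := #|[set w | e v w]|.

Definition laplacian (R : ringType) (n : nat) (e : rel 'I_n) : 'M[R]_n :=
  \matrix_(i, j) (if i == j then (deg e i)%:R else if e i j then -1 else 0).

Definition dvec (R : ringType) (n : nat) (i j : 'I_n) : 'rV[R]_n :=
  delta_mx 0 i - delta_mx 0 j.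

(* Effective resistance between i and j (unit resistors): the potential
   difference x_i - x_j of a potential x solving the Kirchhoff system
   x L = e_i - e_j (L symmetric); x is taken as (e_i - e_j) L^+ using the
   library's partial inverse pinvmx. *)
Definition eff_res (R : fieldType) (n : nat) (e : rel 'I_n) (i j : 'I_n) : R :=
  let x := dvec R i j *m pinvmx (laplacian R e) in
  x 0 i - x 0 j.

Definition add_deg_kirchhoff (R : fieldType) (n : nat) (e : rel 'I_n) : R :=
  \sum_(i < n) \sum_(j < n | (i < j)%N)
     ((deg e i)%:R + (deg e j)%:R) * eff_res R e i j.

Definition sigma2 (R : fieldType) (n : nat) (e : rel 'I_n) : R :=
  (2 / n%:R) * \sum_(i < n) \sum_(j < n | (i < j)%N && e i j)
                  ((deg e i)%:R * (deg e j)%:R)^-1.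

(* Main.v *)
Require Import Defs.
From HB Require Import structures.
From mathcomp Require Import all_boot all_order all_algebra.
From mathcomp Require Import ring lra.
Import Order.TTheory GRing.Theory Num.Theory.
Local Open Scope ring_scope.
Set Implicit Arguments. Unset Strict Implicit. Unset Printing Implicit Defensive.

Section G.
Variable R : rcfType.
Variable n : nat.
Variable e : rel 'I_n.
Hypothesis Hsym : symmetric e.
Hypothesis Hirr : irreflexive e.
Hypothesis Hconn : connected_graph e.
Hypothesis Hn : (2 <= n)%N.

Definition dg (i : 'I_n) : R := (deg e i)%:R.
Definition adj (i j : 'I_n) : R := (e i j)%:R.
Definition Lap := laplacian R e.

Lemma adj_sym i j : adj i j = adj j i.
Proof. by rewrite /adj Hsym. Qed.

Lemma adj_ii i : adj i i = 0.
Proof. by rewrite /adj Hirr. Qed.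

Lemma adj_sq i j : adj i j ^+ 2 = adj i j.
Proof. by rewrite /adj; case: (e i j); rewrite ?expr1n ?expr0n. Qed.

Lemma adj_ge0 i j : 0 <= adj i j.
Proof. by rewrite /adj ler0n. Qed.

Lemma degE i : dg i = \sum_j adj i j.
Proof.
rewrite /dg /adj /deg -natr_sum; congr (_%:R).
rewrite -sum1_card big_mkcond /=; apply: eq_bigr => j _.
by rewrite inE; case: (e i j).
Qed.

Lemma LapE i j : Lap i j = (i == j)%:R * dg i - adj i j.
Proof.
rewrite /Lap /laplacian mxE; case: eqP => [->|_].
  by rewrite adj_ii mul1r subr0.
by rewrite mul0r sub0r /adj; case: (e i j); rewrite ?oppr0.
Qed.

Lemma CSw (T : finType) (w x y : T -> R) : (forall p, 0 <= w p) ->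
  (\sum_p w p * x p * y p) ^+ 2 <= (\sum_p w p * x p ^+ 2) * (\sum_p w p * y p ^+ 2).
Proof.
move=> w0.
have H : 0 <= \sum_p \sum_q w p * w q * (x p * y q - x q * y p) ^+ 2.
  apply: sumr_ge0 => p _; apply: sumr_ge0 => q _.
  by rewrite mulr_ge0 ?sqr_ge0 ?mulr_ge0.
have E : \sum_p \sum_q w p * w q * (x p * y q - x q * y p) ^+ 2 =
   \sum_p \sum_q ((w p * x p ^+ 2) * (w q * y q ^+ 2))
 + \sum_p \sum_q ((w q * x q ^+ 2) * (w p * y p ^+ 2))
 - 2 * \sum_p \sum_q ((w p * x p * y p) * (w q * x q * y q)).
  rewrite mulr_sumr -big_split -sumrB /=; apply: eq_bigr => p _.
  rewrite mulr_sumr -big_split -sumrB /=; apply: eq_bigr => q _.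
  ring.
have E2 : \sum_p \sum_q ((w q * x q ^+ 2) * (w p * y p ^+ 2)) = (\sum_p w p * x p ^+ 2) * (\sum_p w p * y p ^+ 2).
  by rewrite big_distrlr /= exchange_big.
move: H; rewrite E E2 -!big_distrlr /=.
move=> H; rewrite expr2; lra.
Qed.

Lemma CSt (T : finType) (w x : T -> R) : (forall p, 0 < w p) ->
  (\sum_p x p) ^+ 2 <= (\sum_p x p ^+ 2 / w p) * (\sum_p w p).
Proof.
move=> w0.
have H' : forall p, 0 <= (w p)^-1 by move=> p; rewrite invr_ge0 ltW.
have := @CSw T (fun p => (w p)^-1) x w H'.
have E1 p : (w p)^-1 * x p * w p = x p by rewrite mulrAC mulVf ?mul1r // gt_eqF.
have E2 p : (w p)^-1 * w p ^+ 2 = w p by rewrite expr2 mulKf // gt_eqF.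
have E3 p : (w p)^-1 * x p ^+ 2 = x p ^+ 2 / w p by rewrite mulrC.
by rewrite (eq_bigr _ (fun p _ => E1 p)) (eq_bigr _ (fun p _ => E2 p)) (eq_bigr _ (fun p _ => E3 p)).
Qed.

Definition dot (u v : 'rV[R]_n) : R := \sum_k u 0 k * v 0 k.
Definition qf (x y : 'rV[R]_n) : R := dot (x *m Lap) y.

Lemma sum_delta (F : 'I_n -> R) k : \sum_j ((k == j)%:R * F j) = F k.
Proof.
rewrite (bigD1 k) //= eqxx mul1r big1 ?addr0 // => j.
by rewrite eq_sym => /negbTE ->; rewrite mul0r.
Qed.

Lemma qfE x y : qf x y = \sum_i \sum_j adj i j * (x 0 i * y 0 i - x 0 i * y 0 j).
Proof.
rewrite /qf /dot.
under eq_bigr do rewrite mxE mulr_suml.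
rewrite exchange_big /=; apply: eq_bigr => k _.
under eq_bigr do rewrite LapE.
transitivity (\sum_j ((k == j)%:R * (x 0 k * dg k * y 0 j)) - \sum_j adj k j * (x 0 k * y 0 j)).
  by rewrite -sumrB; apply: eq_bigr => j _; ring.
rewrite sum_delta degE mulr_sumr mulr_suml -sumrB; apply: eq_bigr => j _; ring.
Qed.

Lemma qf2 x y : 2 * qf x y = \sum_i \sum_j adj i j * ((x 0 i - x 0 j) * (y 0 i - y 0 j)).
Proof.
have -> : 2 * qf x y = qf x y + qf x y by ring.
rewrite {2}qfE exchange_big /=.
rewrite qfE -big_split /=; apply: eq_bigr => i _.
rewrite -big_split /=; apply: eq_bigr => j _.
rewrite (adj_sym j i); ring.
Qed.

Lemma qf_sym x y : qf x y = qf y x.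
Proof.
have H1 := qf2 x y; have H2 := qf2 y x.
have E : \sum_i \sum_j adj i j * ((x 0 i - x 0 j) * (y 0 i - y 0 j)) =
         \sum_i \sum_j adj i j * ((y 0 i - y 0 j) * (x 0 i - x 0 j)).
  by apply: eq_bigr => i _; apply: eq_bigr => j _; rewrite (mulrC (x 0 i - _)).
move: H1 H2; rewrite E; lra.
Qed.

Lemma qf_ge0 x : 0 <= qf x x.
Proof.
have H := qf2 x x.
have : 0 <= \sum_i \sum_j adj i j * ((x 0 i - x 0 j) * (x 0 i - x 0 j)).
  apply: sumr_ge0 => i _; apply: sumr_ge0 => j _.
  by rewrite mulr_ge0 ?adj_ge0 // -expr2 sqr_ge0.
lra.
Qed.

Lemma qf_CS x y : qf x y ^+ 2 <= qf x x * qf y y.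
Proof.
have H := @CSw _ (fun p : 'I_n * 'I_n => adj p.1 p.2) (fun p => x 0 p.1 - x 0 p.2)
   (fun p => y 0 p.1 - y 0 p.2) (fun p => adj_ge0 _ _).
have E1 := qf2 x y; have E2 := qf2 x x; have E3 := qf2 y y.
rewrite pair_bigA /= in E1; rewrite pair_bigA /= in E2; rewrite pair_bigA /= in E3.
have F1 : \sum_p adj p.1 p.2 * ((x 0 p.1 - x 0 p.2) * (y 0 p.1 - y 0 p.2)) =
   \sum_p adj p.1 p.2 * (x 0 p.1 - x 0 p.2) * (y 0 p.1 - y 0 p.2).
  by apply: eq_bigr => p _; rewrite mulrA.
have F2 : forall z : 'rV[R]_n, \sum_p adj p.1 p.2 * ((z 0 p.1 - z 0 p.2) * (z 0 p.1 - z 0 p.2)) =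
   \sum_p adj p.1 p.2 * (z 0 p.1 - z 0 p.2) ^+ 2.
  by move=> z; apply: eq_bigr => p _; rewrite expr2.
rewrite F1 in E1; rewrite F2 in E2; rewrite F2 in E3.
rewrite -E1 -E2 -E3 in H.
nra.
Qed.

Lemma edge_const (c : 'I_n -> R) : (forall i j, e i j -> c i = c j) -> forall i j, c i = c j.
Proof.
move=> H i j; have /connectP [p pth ->] := Hconn i j.
elim: p i pth => [|k p IH] i //= /andP [eik pth].
by rewrite (H _ _ eik) IH.
Qed.

Lemma qf0_const x : qf x x = 0 -> forall i j, x 0 i = x 0 j.
Proof.
move=> H0; apply: edge_const => i j eij.
have H := qf2 x x; rewrite H0 mulr0 in H.
have G1 : forall k, true -> 0 <= \sum_l adj k l * ((x 0 k - x 0 l) * (x 0 k - x 0 l)).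
  move=> k _; apply: sumr_ge0 => l _.
  by rewrite mulr_ge0 ?adj_ge0 // -expr2 sqr_ge0.
have H2 := psumr_eq0P G1 (esym H) (i:=i) isT.
have G2 : forall l, true -> 0 <= adj i l * ((x 0 i - x 0 l) * (x 0 i - x 0 l)).
  by move=> l _; rewrite mulr_ge0 ?adj_ge0 // -expr2 sqr_ge0.
have := psumr_eq0P G2 H2 (i:=j) isT.
by rewrite /adj eij mul1r -expr2 => /eqP; rewrite sqrf_eq0 subr_eq0 => /eqP.
Qed.

Lemma dg_gt0 i : 0 < dg i.
Proof.
have : (0 < #|predC1 i|)%N by rewrite cardC1 card_ord; case: n Hn => [|[]].
case/card_gt0P => j; rewrite !inE => ji.
have /connectP [p pth jE] := Hconn i j.
case: p pth jE => [|k p] /=; first by move=> _ jE; rewrite jE eqxx in ji.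
case/andP => eik _ _.
rewrite /dg ltr0n /deg; apply/card_gt0P; exists k; by rewrite inE.
Qed.

Lemma dg_neq0 i : dg i != 0.
Proof. by rewrite gt_eqF ?dg_gt0. Qed.

Lemma LapS i j : Lap i j = Lap j i.
Proof. by rewrite !LapE adj_sym eq_sym; case: eqP => [->|_]; rewrite ?mul0r. Qed.

Definition Lp := pinvmx Lap.
Definition X (a : 'rV[R]_n) := a *m Lp.
Definition zs (a : 'rV[R]_n) := \sum_k a 0 k = 0.
Definition beta (a b : 'rV[R]_n) := dot a (X b).

Lemma X_sol a : zs a -> X a *m Lap = a.
Proof.
move=> za; apply: mulmxKpV; rewrite submxE; apply/eqP/rowP => j.
set C := cokermx Lap.
have HC : Lap *m C = 0 by apply: mulmx_coker.
pose z : 'rV[R]_n := \row_k C k j.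
have qz : qf z z = 0.
  rewrite /qf /dot big1 // => m _.
  rewrite !mxE.
  have -> : \sum_k z 0 k * Lap k m = (Lap *m C) m j.
    by rewrite mxE; apply: eq_bigr => k _; rewrite mxE LapS mulrC.
  by rewrite HC mxE mul0r.
have zc := qf0_const qz.
rewrite [LHS]mxE [RHS]mxE.
transitivity (\sum_k a 0 k * z 0 j).
  by apply: eq_bigr => k _; rewrite -(zc k j) [z 0 k]mxE.
by rewrite -mulr_suml za mul0r.
Qed.

Lemma dotC u v : dot u v = dot v u.
Proof. by apply: eq_bigr => k _; rewrite mulrC. Qed.

Lemma dotDl u v w : dot (u + v) w = dot u w + dot v w.
Proof. by rewrite /dot -big_split; apply: eq_bigr => k _; rewrite mxE mulrDl. Qed.

Lemma dotNl u w : dot (- u) w = - dot u w.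
Proof. by rewrite /dot -sumrN; apply: eq_bigr => k _; rewrite mxE mulNr. Qed.

Lemma dotBl u v w : dot (u - v) w = dot u w - dot v w.
Proof. by rewrite dotDl dotNl. Qed.

Lemma dotZl (c : R) u w : dot (c *: u) w = c * dot u w.
Proof. by rewrite /dot mulr_sumr; apply: eq_bigr => k _; rewrite mxE mulrA. Qed.

Lemma dotBr u v w : dot w (u - v) = dot w u - dot w v.
Proof. by rewrite !(dotC w) dotBl. Qed.

Lemma dotZr (c : R) u w : dot w (c *: u) = c * dot w u.
Proof. by rewrite !(dotC w) dotZl. Qed.

Lemma betaBl a b c : beta (a - b) c = beta a c - beta b c.
Proof. by rewrite /beta dotBl. Qed.

Lemma betaZl (k : R) a c : beta (k *: a) c = k * beta a c.
Proof. by rewrite /beta dotZl. Qed.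

Lemma betaBr a b c : beta c (a - b) = beta c a - beta c b.
Proof. by rewrite /beta /X mulmxBl dotBr. Qed.

Lemma betaZr (k : R) a c : beta c (k *: a) = k * beta c a.
Proof. by rewrite /beta /X -scalemxAl dotZr. Qed.

Lemma beta_qf a b : zs a -> beta a b = qf (X a) (X b).
Proof. by move=> za; rewrite /beta {1}(esym (X_sol za)). Qed.

Lemma beta_sym a b : zs a -> zs b -> beta a b = beta b a.
Proof. by move=> za zb; rewrite !beta_qf // qf_sym. Qed.

Lemma beta_ge0 a : zs a -> 0 <= beta a a.
Proof. by move=> za; rewrite beta_qf // qf_ge0. Qed.

Lemma beta_L x b : zs b -> beta (x *m Lap) b = dot x b.
Proof.
move=> zb; rewrite /beta -/(qf x (X b)) qf_sym /qf (X_sol zb) dotC //.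
Qed.

Lemma beta_CS a x : zs a -> dot a x ^+ 2 <= beta a a * qf x x.
Proof.
move=> za; have -> : dot a x = qf (X a) x by rewrite /qf (X_sol za).
by rewrite beta_qf // qf_CS.
Qed.

Definition ev (i : 'I_n) : 'rV[R]_n := delta_mx 0 i.
Lemma evE i k : ev i 0 k = (i == k)%:R.
Proof. by rewrite mxE eqxx /= eq_sym. Qed.

Lemma dot_ev i v : dot (ev i) v = v 0 i.
Proof. by rewrite /dot; under eq_bigr do rewrite evE; apply: sum_delta. Qed.

Lemma qf_ev i : qf (ev i) (ev i) = dg i.
Proof. by rewrite /qf dotC dot_ev mxE (bigD1 i) //= big1 ?addr0 ?evE ?eqxx ?mul1r ?LapE ?eqxx ?mul1r ?adj_ii ?subr0 // => k /negbTE; rewrite evE eq_sym => ->; rewrite mul0r. Qed.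

Definition Ssum : R := \sum_k dg k.
Lemma Ssum_gt0 : 0 < Ssum.
Proof.
rewrite /Ssum; have [k _] : exists k : 'I_n, true by exists (Ordinal (ltnW Hn)).
by rewrite (bigD1 k) //= ltr_wpDr ?dg_gt0 // sumr_ge0 // => i _; rewrite ltW ?dg_gt0.
Qed.
Definition pi_ (k : 'I_n) : R := dg k / Ssum.
Lemma sum_pi : \sum_k pi_ k = 1.
Proof. by rewrite /pi_ -mulr_suml divff // gt_eqF ?Ssum_gt0. Qed.

Definition pivec : 'rV[R]_n := \row_k pi_ k.
Definition avec i : 'rV[R]_n := ev i - pivec.

Lemma avecE i k : avec i 0 k = (i == k)%:R - pi_ k.
Proof. by rewrite !mxE eqxx /= eq_sym. Qed.

Lemma zs_avec i : zs (avec i).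
Proof.
rewrite /zs; under eq_bigr do rewrite avecE.
have H1 : \sum_k ((i == k)%:R : R) = 1.
  transitivity (\sum_k ((i == k)%:R * (1:R))); first by apply: eq_bigr => k _; rewrite mulr1.
  exact: (sum_delta (fun _ => 1) i).
by rewrite sumrB sum_pi H1 subrr.
Qed.

Definition Phi i := beta (avec i) (avec i).

Lemma eff_resE i j : eff_res R e i j = beta (avec i - avec j) (avec i - avec j).
Proof.
have -> : avec i - avec j = ev i - ev j by rewrite /avec opprB addrA subrK.
by rewrite /beta dotBl !dot_ev.
Qed.

Lemma beta_sq a b : beta (a - b) (a - b) = beta a a - beta a b - beta b a + beta b b.
Proof. rewrite betaBl !betaBr; ring. Qed.

Lemma eff_resE2 i j : eff_res R e i j =
  Phi i - beta (avec i) (avec j) - beta (avec j) (avec i) + Phi j.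
Proof. by rewrite eff_resE beta_sq. Qed.


Lemma eff_res_sym i j : eff_res R e i j = eff_res R e j i.
Proof.
rewrite !eff_resE2.
move: (Phi i) (Phi j) (beta (avec i) (avec j)) (beta (avec j) (avec i)) => a b c d.
ring.
Qed.

Lemma eff_res_ii i : eff_res R e i i = 0.
Proof.
rewrite eff_resE2 /Phi.
move: (beta (avec i) (avec i)) => a.
ring.
Qed.
Lemma sum_upper (f : 'I_n -> 'I_n -> R) : (forall i, f i i = 0) ->
  \sum_(i < n) \sum_(j < n | (i < j)%N) (f i j + f j i) = \sum_i \sum_j f i j.
Proof.
move=> f0.
under eq_bigr do rewrite big_split /=.
rewrite big_split /=.
rewrite [X in _ + X = _](exchange_big_dep xpredT) //=.
rewrite -big_split /=; apply: eq_bigr => i _.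
rewrite [RHS](bigID (fun j : 'I_n => (i < j)%N)) /=.
congr (_ + _).
rewrite [RHS](bigID (fun j : 'I_n => (j < i)%N)) /=.
rewrite [X in _ = _ + X]big1.
  rewrite addr0. apply: eq_bigl => j /=.
  case H: (j < i)%N; last by rewrite andbF.
  by rewrite andbT -leqNgt ltnW.
move=> j /andP [h1 h2].
rewrite ltnNge negbK in h1; rewrite ltnNge negbK in h2.
have -> : j = i by apply: ord_inj; apply/eqP; rewrite eqn_leq h1 h2.
by rewrite f0.
Qed.
Lemma sum_d_avec v : \sum_i dg i * dot (avec i) v = 0.
Proof.
under eq_bigr do rewrite /dot mulr_sumr.
rewrite exchange_big big1 // => k _.
transitivity (\sum_i ((k == i)%:R * (dg i * v 0 k)) - \sum_i dg i * (pi_ k * v 0 k)).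
  by rewrite -sumrB; apply: eq_bigr => i _; rewrite avecE eq_sym; ring.
rewrite sum_delta -mulr_suml -/Ssum /pi_.
have S0 : Ssum != 0 by rewrite gt_eqF ?Ssum_gt0.
by field.
Qed.


Lemma Rplus_id : add_deg_kirchhoff R e = n%:R * \sum_i dg i * Phi i + Ssum * \sum_j Phi j.
Proof.
rewrite /add_deg_kirchhoff.
have E : forall i j, ((deg e i)%:R + (deg e j)%:R) * eff_res R e i j =
  dg i * eff_res R e i j + dg j * eff_res R e j i.
  by move=> i j; rewrite (eff_res_sym j i) /dg mulrDl.
under eq_bigr do under eq_bigr do rewrite E.
rewrite (@sum_upper (fun i j => dg i * eff_res R e i j)); last first.
  by move=> i; rewrite eff_res_ii mulr0.
have P : forall i j, dg i * eff_res R e i j =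
   (dg i * Phi i + dg i * Phi j) - dg i * beta (avec i) (avec j) - dg i * beta (avec i) (avec j).
  move=> i j; rewrite eff_resE2 (beta_sym (zs_avec j) (zs_avec i)).
  move: (Phi i) (Phi j) (beta (avec i) (avec j)) (dg i) => a b c d; ring.
under eq_bigr do under eq_bigr do rewrite P.
under eq_bigr do rewrite !sumrB.
rewrite !sumrB.
have Z : \sum_i \sum_j dg i * beta (avec i) (avec j) = 0.
  rewrite exchange_big big1 // => j _; exact: (etrans _ (sum_d_avec (X (avec j)))).
rewrite Z !subr0 /=.
under eq_bigr do rewrite big_split /=.
rewrite big_split /= mulr_sumr. congr (_ + _).
  by apply: eq_bigr => i _; rewrite sumr_const card_ord mulr_natl.
rewrite exchange_big /= mulr_sumr /Ssum; apply: eq_bigr => j _.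
by rewrite -mulr_suml mulrC.
Qed.

Lemma avec_ii i : avec i 0 i = 1 - pi_ i.
Proof. by rewrite avecE eqxx. Qed.

Lemma sum_pi1 : \sum_j (1 - pi_ j) = n%:R - 1.
Proof. by rewrite sumrB sum_pi sumr_const card_ord. Qed.

Lemma Phi_low j : (1 - pi_ j) ^+ 2 / dg j <= Phi j.
Proof.
have H := beta_CS (ev j) (zs_avec j).
rewrite dotC dot_ev avec_ii qf_ev -/(Phi j) in H.
by rewrite ler_pdivrMr ?dg_gt0.
Qed.

Lemma PhiII : (n%:R - 1) ^+ 2 <= Ssum * \sum_j Phi j.
Proof.
have H := @CSt _ dg (fun j => 1 - pi_ j) dg_gt0.
rewrite sum_pi1 -/Ssum in H.
apply: (le_trans H); rewrite mulrC; apply: ler_wpM2l; first exact: ltW Ssum_gt0.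
by apply: ler_sum => j _; apply: Phi_low.
Qed.

Definition Kc : R := \sum_i dg i * Phi i.
Definition Tp : R := \sum_i \sum_k adj i k / (dg i * dg k).

Lemma evL i k : (ev i *m Lap) 0 k = Lap i k.
Proof. by rewrite mxE; under eq_bigr do rewrite evE; apply: sum_delta. Qed.

Lemma rowsumL i : \sum_k Lap i k = 0.
Proof.
under eq_bigr do rewrite LapE.
rewrite sumrB sum_delta degE subrr //.
Qed.

Lemma zs_evL i : zs (ev i *m Lap).
Proof. by rewrite /zs; under eq_bigr do rewrite evL; apply: rowsumL. Qed.

Lemma zsB a b : zs a -> zs b -> zs (a - b).
Proof.
rewrite /zs => za zb; under eq_bigr do rewrite !mxE.
by rewrite sumrB za zb subrr.
Qed.

Lemma zsZ (k : R) a : zs a -> zs (k *: a).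
Proof.
rewrite /zs => za; under eq_bigr do rewrite !mxE.
by rewrite -mulr_sumr za mulr0.
Qed.

Lemma quad_low b : zs b -> \sum_k b 0 k ^+ 2 / dg k <= 2 * beta b b.
Proof.
move=> zb.
pose z : 'rV[R]_n := \row_k (b 0 k / dg k).
have Hq : dot b z = \sum_k b 0 k ^+ 2 / dg k.
  by apply: eq_bigr => k _; rewrite mxE mulrA -expr2.
have H := beta_CS z zb.
rewrite Hq in H.
set q := \sum_k b 0 k ^+ 2 / dg k in H *.
have q0 : 0 <= q by apply: sumr_ge0 => k _; rewrite divr_ge0 ?sqr_ge0 ?ltW ?dg_gt0.
have b0 := beta_ge0 zb.
have Hz : qf z z <= 2 * q.
  have E := qf2 z z.
  have L1 : \sum_i \sum_j adj i j * ((z 0 i - z 0 j) * (z 0 i - z 0 j)) <=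
            \sum_i \sum_j (2 * (adj i j * z 0 i ^+ 2) + 2 * (adj i j * z 0 j ^+ 2)).
    apply: ler_sum => i _; apply: ler_sum => j _.
    have a0 := adj_ge0 i j.
    move: (adj i j) (z 0 i) (z 0 j) a0 => a x y a0.
    rewrite -subr_ge0.
    have -> : 2 * (a * x ^+ 2) + 2 * (a * y ^+ 2) - a * ((x - y) * (x - y)) = a * (x + y) ^+ 2 by ring.
    by rewrite mulr_ge0 ?sqr_ge0.
  have L2 : \sum_i \sum_j (2 * (adj i j * z 0 i ^+ 2) + 2 * (adj i j * z 0 j ^+ 2)) = 4 * q.
    under eq_bigr do rewrite big_split /=.
    rewrite big_split /=.
    have W : \sum_i \sum_j 2 * (adj i j * z 0 i ^+ 2) = 2 * q.
      rewrite /q mulr_sumr; apply: eq_bigr => i _.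
      rewrite -mulr_sumr -mulr_suml -degE mxE; congr (2 * _).
      by have := dg_neq0 i => ?; field.
    have W2 : \sum_i \sum_j 2 * (adj i j * z 0 j ^+ 2) = 2 * q.
      rewrite exchange_big /= -W; apply: eq_bigr => i _; apply: eq_bigr => j _.
      by rewrite adj_sym.
    rewrite W W2; ring.
  lra.
have : q ^+ 2 <= beta b b * (2 * q) by apply: (le_trans H); rewrite ler_wpM2l.
move=> h; nra.
Qed.

Definition bvec (c : R) i : 'rV[R]_n := ev i *m Lap - (c * dg i) *: avec i.

Lemma zs_bvec c i : zs (bvec c i).
Proof. by apply: zsB; [apply: zs_evL | apply: zsZ; apply: zs_avec]. Qed.

Lemma bvecE c i k : bvec c i 0 k = Lap i k - c * dg i * ((i == k)%:R - pi_ k).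
Proof. by rewrite /bvec mxE evL; congr (_ + _); rewrite !mxE eqxx /= eq_sym. Qed.

Lemma Phib c i : beta (bvec c i) (bvec c i) =
  dg i - 2 * c * dg i * (1 - pi_ i) + c ^+ 2 * dg i ^+ 2 * Phi i.
Proof.
have zb := zs_bvec c i; have za := zs_avec i.
have E1 : beta (bvec c i) (bvec c i) = bvec c i 0 i - (c * dg i) * beta (avec i) (bvec c i).
  by rewrite {1}/bvec betaBl beta_L // dot_ev betaZl.
have E2 : beta (avec i) (bvec c i) = (1 - pi_ i) - (c * dg i) * Phi i.
  by rewrite beta_sym // /bvec betaBl beta_L // dot_ev betaZl avec_ii.
rewrite E1 E2 bvecE LapE eqxx adj_ii.
move: (Phi i) (pi_ i) (dg i) => p q d /=; ring.
Qed.

Lemma bsq_point c i k : bvec c i 0 k ^+ 2 / (dg i * dg k) =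
  (i == k)%:R * ((1 - c) ^+ 2 + 2 * (1 - c) * c * pi_ i) + c ^+ 2 * pi_ i * pi_ k
  - 2 * c * adj i k / Ssum + adj i k / (dg i * dg k).
Proof.
have S0 : Ssum != 0 by rewrite gt_eqF ?Ssum_gt0.
have Di := dg_neq0 i; have Dk := dg_neq0 k.
rewrite bvecE LapE /pi_.
case: (eqVneq i k) => [<-|ik].
  rewrite adj_ii /=; move: (dg i) (Ssum) Di S0 => d S Di S0; field.
  by rewrite Di S0.
rewrite /adj; case: (e i k) => /=.
  move: (dg i) (dg k) (Ssum) Di Dk S0 => d1 d2 S Di Dk S0; field.
  by rewrite Di Dk S0.
move: (dg i) (dg k) (Ssum) Di Dk S0 => d1 d2 S Di Dk S0; field.
by rewrite Di Dk S0.
Qed.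

Lemma bsq_sum c : \sum_i \sum_k bvec c i 0 k ^+ 2 / (dg i * dg k) =
   n%:R * (1 - c) ^+ 2 - c ^+ 2 + Tp.
Proof.
have S0 : Ssum != 0 by rewrite gt_eqF ?Ssum_gt0.
have Ei : forall i, \sum_k bvec c i 0 k ^+ 2 / (dg i * dg k) =
   ((1 - c) ^+ 2 + 2 * (1 - c) * c * pi_ i) + c ^+ 2 * pi_ i - 2 * c * dg i / Ssum
   + \sum_k adj i k / (dg i * dg k).
  move=> i; under eq_bigr do rewrite bsq_point.
  rewrite big_split /= sumrB big_split /=.
  congr (_ + _ - _ + _).
  - exact: (sum_delta (fun _ => (1 - c) ^+ 2 + 2 * (1 - c) * c * pi_ i) i).
  - by rewrite -mulr_sumr sum_pi mulr1.
  - by rewrite -mulr_suml -mulr_sumr -degE.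
rewrite (eq_bigr _ (fun i _ => Ei i)).
rewrite big_split /= sumrB big_split /= big_split /= -/Tp.
rewrite sumr_const card_ord -mulr_sumr sum_pi -mulr_sumr sum_pi -mulr_suml -mulr_sumr -/Ssum.
rewrite -[_ *+ n]mulr_natl.
move: (n%:R : R) Tp Ssum S0 => N T S S0; field.
exact: S0.
Qed.

Lemma Kbound c : n%:R * (1 - c) ^+ 2 - c ^+ 2 + Tp <=
   2 * n%:R - 4 * c * (n%:R - 1) + 2 * c ^+ 2 * Kc.
Proof.
rewrite -bsq_sum.
have E : forall i, \sum_k bvec c i 0 k ^+ 2 / (dg i * dg k) =
   (dg i)^-1 * \sum_k bvec c i 0 k ^+ 2 / dg k.
  move=> i; rewrite mulr_sumr; apply: eq_bigr => k _.
  by rewrite invfM mulrCA mulrA.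
rewrite (eq_bigr _ (fun i _ => E i)).
apply: le_trans (_ : \sum_i (dg i)^-1 * (2 * beta (bvec c i) (bvec c i)) <= _).
  apply: ler_sum => i _; apply: ler_wpM2l; first by rewrite invr_ge0 ltW ?dg_gt0.
  exact: quad_low (zs_bvec c i).
rewrite le_eqVlt; apply/orP; left; apply/eqP.
under eq_bigr do rewrite Phib.
have Ei : forall i, (dg i)^-1 * (2 * (dg i - 2 * c * dg i * (1 - pi_ i) + c ^+ 2 * dg i ^+ 2 * Phi i))
   = 2 - 4 * c + 4 * c * pi_ i + 2 * c ^+ 2 * (dg i * Phi i).
  move=> i; have Di := dg_neq0 i; move: (dg i) (Phi i) (pi_ i) Di => d p q Di; field.
  exact: Di.
rewrite (eq_bigr _ (fun i _ => Ei i)).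
rewrite big_split /= big_split /= -mulr_sumr sum_pi -mulr_sumr -/Kc sumr_const card_ord.
rewrite -[_ *+ n]mulr_natl; move: (n%:R : R) Kc => N K; ring.
Qed.

Lemma Tp_sigma : Tp = n%:R * sigma2 R e.
Proof.
have N0 : (n%:R : R) != 0 by rewrite pnatr_eq0; case: n Hn.
rewrite /sigma2 mulrA mulrCA divff // mulr1 /Tp.
rewrite -(@sum_upper (fun i j => adj i j / (dg i * dg j))); last first.
  by move=> i; rewrite adj_ii mul0r.
rewrite mulr_sumr; apply: eq_bigr => i _.
rewrite big_mkcondr /= mulr_sumr; apply: eq_bigr => j _.
rewrite /adj (Hsym j i) (mulrC (dg j)) /dg; case: (e i j) => /=; ring.
Qed.

Lemma Tp_low : 1 <= (Tp - 1) * (n%:R - 1).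
Proof.
have S0 : Ssum != 0 by rewrite gt_eqF ?Ssum_gt0.
pose Q i k := adj i k / dg i - dg k / Ssum.
pose Rr k i := (k == i)%:R - dg i / Ssum.
have H := @CSw _ (fun p : 'I_n * 'I_n => dg p.2 / dg p.1)
   (fun p => Q p.1 p.2 * dg p.1 / dg p.2) (fun p => Rr p.2 p.1)
   (fun p => divr_ge0 (ltW (dg_gt0 _)) (ltW (dg_gt0 _))).
have Ef : forall i k, dg k / dg i * (Q i k * dg i / dg k) * Rr k i =
   - (adj i k / Ssum) - (i == k)%:R * (dg k / Ssum) + dg i * dg k / Ssum ^+ 2.
  move=> i k; have Di := dg_neq0 i; have Dk := dg_neq0 k; rewrite /Q /Rr.
  case: (eqVneq i k) => [<-|ik]; first rewrite ?eqxx adj_ii /=.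
    by move: (dg i) Ssum Di S0 => d S Di S0; field; rewrite ?Di ?S0.
  rewrite ?(eq_sym k i) ?(negbTE ik) /=.
  by move: (dg i) (dg k) (adj i k) Ssum Di Dk S0 => d1 d2 a S Di Dk S0; field; rewrite ?Di ?Dk ?S0.
have Eg : forall i k, dg k / dg i * (Q i k * dg i / dg k) ^+ 2 =
   adj i k / (dg i * dg k) - 2 * (adj i k / Ssum) + dg i * dg k / Ssum ^+ 2.
  move=> i k; have Di := dg_neq0 i; have Dk := dg_neq0 k; rewrite /Q /adj.
  case: (e i k) => /=.
    by move: (dg i) (dg k) Ssum Di Dk S0 => d1 d2 S Di Dk S0; field; rewrite ?Di ?Dk ?S0.
  by move: (dg i) (dg k) Ssum Di Dk S0 => d1 d2 S Di Dk S0; field; rewrite ?Di ?Dk ?S0.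
have Eh : forall i k, dg k / dg i * Rr k i ^+ 2 =
   (i == k)%:R * (1 - 2 * (dg i / Ssum)) + dg i * dg k / Ssum ^+ 2.
  move=> i k; have Di := dg_neq0 i; have Dk := dg_neq0 k; rewrite /Rr.
  case: (eqVneq i k) => [<-|ik]; first rewrite ?eqxx /=.
    by move: (dg i) Ssum Di S0 => d S Di S0; field; rewrite ?Di ?S0.
  rewrite ?(eq_sym k i) ?(negbTE ik) /=.
  by move: (dg i) (dg k) Ssum Di Dk S0 => d1 d2 S Di Dk S0; field; rewrite ?Di ?Dk ?S0.
have C1 : \sum_i \sum_k dg k / dg i * (Q i k * dg i / dg k) * Rr k i =
  \sum_(p : 'I_n * 'I_n) dg p.2 / dg p.1 * (Q p.1 p.2 * dg p.1 / dg p.2) * Rr p.2 p.1 by rewrite pair_bigA.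
have C2 : \sum_i \sum_k dg k / dg i * (Q i k * dg i / dg k) ^+ 2 =
  \sum_(p : 'I_n * 'I_n) dg p.2 / dg p.1 * (Q p.1 p.2 * dg p.1 / dg p.2) ^+ 2 by rewrite pair_bigA.
have C3 : \sum_i \sum_k dg k / dg i * Rr k i ^+ 2 =
  \sum_(p : 'I_n * 'I_n) dg p.2 / dg p.1 * Rr p.2 p.1 ^+ 2 by rewrite pair_bigA.
rewrite -C1 -C2 -C3 in H.
have Sdd : \sum_i \sum_k dg i * dg k / Ssum ^+ 2 = 1.
  transitivity ((\sum_i dg i) * (\sum_k dg k) / Ssum ^+ 2).
    by rewrite big_distrlr mulr_suml; apply: eq_bigr => i _; rewrite mulr_suml.
  by rewrite -/Ssum expr2 divff // mulf_neq0.
have Sa : \sum_i \sum_k adj i k / Ssum = 1.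
  transitivity ((\sum_i \sum_k adj i k) / Ssum).
    by rewrite mulr_suml; apply: eq_bigr => i _; rewrite mulr_suml.
  by rewrite (eq_bigr _ (fun i _ => esym (degE i))) -/Ssum divff.
have Sd : \sum_i \sum_k (i == k)%:R * (dg k / Ssum) = 1.
  by rewrite (eq_bigr _ (fun i _ => sum_delta (fun k => dg k / Ssum) i)) -mulr_suml divff.
have E1 : \sum_i \sum_k dg k / dg i * (Q i k * dg i / dg k) * Rr k i = -1.
  under eq_bigr do under eq_bigr do rewrite Ef.
  under eq_bigr do rewrite big_split /= sumrB sumrN.
  rewrite big_split /= sumrB sumrN Sdd Sa Sd; ring.
have E2 : \sum_i \sum_k dg k / dg i * (Q i k * dg i / dg k) ^+ 2 = Tp - 1.
  under eq_bigr do under eq_bigr do rewrite Eg.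
  under eq_bigr do rewrite big_split /= sumrB.
  rewrite big_split /= sumrB Sdd -/Tp.
  have -> : \sum_i \sum_k 2 * (adj i k / Ssum) = 2 * 1.
    by rewrite -Sa mulr_sumr; apply: eq_bigr => i _; rewrite mulr_sumr.
  ring.
have E3 : \sum_i \sum_k dg k / dg i * Rr k i ^+ 2 = n%:R - 1.
  under eq_bigr do under eq_bigr do rewrite Eh.
  under eq_bigr do rewrite big_split /=.
  rewrite big_split /= Sdd.
  rewrite (eq_bigr _ (fun i _ => sum_delta (fun _ => 1 - 2 * (dg i / Ssum)) i)).
  rewrite sumrB sumr_const card_ord -mulr_sumr -mulr_suml -/Ssum divff //.
  rewrite -[_ *+ n]mulr_natl; ring.
rewrite E1 E2 E3 in H.
by move: H; rewrite expr2 mulrN1 opprK.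
Qed.

Lemma deg1_uniq x y z : deg e x = 1%N -> e x y -> e x z -> y = z.
Proof.
move=> /eqP /cards1P [w Hw] exy exz.
have : y \in [set u | e x u] by rewrite inE.
have : z \in [set u | e x u] by rewrite inE.
by rewrite Hw !inE => /eqP -> /eqP ->.
Qed.

Lemma deg2_exists : (3 <= n)%N -> exists i, (2 <= deg e i)%N.
Proof.
move=> H3.
case: (boolP [exists i, (2 <= deg e i)%N]) => [/existsP //|/existsPn Hall].
have D1 : forall i, deg e i = 1%N.
  move=> i; have := Hall i; have := dg_gt0 i; rewrite /dg ltr0n.
  by case: (deg e i) => [|[|m]].
pose i0 : 'I_n := Ordinal (ltnW Hn).
have : (0 < #|[set u | e i0 u]|)%N by rewrite -/(deg e i0) D1.
case/card_gt0P => j; rewrite inE => ei0j.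
pose c (k : 'I_n) : R := ((k == i0) || (k == j))%:R.
have Hc : forall x y, e x y -> c x = c y.
  move=> x y exy; rewrite /c.
  case: (eqVneq x i0) => [xi|xi] /=.
    by rewrite -xi in ei0j; rewrite (deg1_uniq (D1 x) exy ei0j) eqxx orbT.
  case: (eqVneq x j) => [xj|xj] /=.
    have eji0 : e j i0 by rewrite Hsym.
    by rewrite -xj in eji0; rewrite (deg1_uniq (D1 x) exy eji0) eqxx.
  case: (eqVneq y i0) => [yi|yi] /=.
    have ei0x : e i0 x by rewrite -yi Hsym.
    by rewrite (deg1_uniq (D1 i0) ei0x ei0j) eqxx in xj.
  case: (eqVneq y j) => [yj|yj] //=.
  have ejx : e j x by rewrite -yj Hsym.
  have eji0 : e j i0 by rewrite Hsym.
  by rewrite (deg1_uniq (D1 j) ejx eji0) eqxx in xi.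
have Hall2 : forall k, (k == i0) || (k == j).
  move=> k; have := edge_const Hc k i0; rewrite /c eqxx /=.
  by case: ((k == i0) || (k == j)) => //= /eqP; rewrite eq_sym oner_eq0.
have : ([set: 'I_n] \subset [set i0; j]).
  by apply/subsetP => k _; rewrite !inE Hall2.
move/subset_leq_card; rewrite cardsT card_ord cards2.
by case: (i0 != j); move=> h; move: (leq_trans H3 h).
Qed.

Lemma Tp_high : (3 <= n)%N -> Tp < n%:R.
Proof.
move=> H3.
have L1 : Tp <= \sum_i (dg i)^-1.
  have E : \sum_i (dg i)^-1 = \sum_i \sum_k (adj i k / dg i ^+ 2 + adj i k / dg k ^+ 2) / 2.
    under [RHS]eq_bigr do rewrite -mulr_suml big_split /=.
    have W : forall i, \sum_k adj i k / dg i ^+ 2 = (dg i)^-1.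
      move=> i; rewrite -mulr_suml -degE.
      by have := dg_neq0 i; move: (dg i) => d Di; field.
    have W2 : \sum_i \sum_k adj i k / dg k ^+ 2 = \sum_i (dg i)^-1.
      rewrite exchange_big /=; apply: eq_bigr => k _; rewrite -W; apply: eq_bigr => i _.
      by rewrite adj_sym.
    rewrite -mulr_suml big_split /= W2 (eq_bigr _ (fun i _ => W i)).
    by move: (\sum_i (dg i)^-1) => x; field.
  rewrite E; apply: ler_sum => i _; apply: ler_sum => k _.
  have Di := dg_gt0 i; have Dk := dg_gt0 k; have a0 := adj_ge0 i k.
  move: (adj i k) (dg i) (dg k) Di Dk a0 => a x y Di Dk a0.
  rewrite -subr_ge0.
  have -> : (a / x ^+ 2 + a / y ^+ 2) / 2 - a / (x * y) = a * (x - y) ^+ 2 / (2 * x ^+ 2 * y ^+ 2).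
    by field; apply/andP; split; apply: lt0r_neq0.
  apply: divr_ge0; first by rewrite mulr_ge0 ?sqr_ge0.
  by apply: mulr_ge0; [apply: mulr_ge0; [by [] | exact: sqr_ge0] | exact: sqr_ge0].
apply: (le_lt_trans L1).
have [i0 Hi0] := deg2_exists H3.
have Le1 : forall i, (dg i)^-1 <= 1.
  move=> i; rewrite invr_le1 ?dg_gt0 ?unitfE ?dg_neq0 //.
  by have := dg_gt0 i; rewrite /dg ltr0n ler1n.
have Lh : (dg i0)^-1 <= 2^-1.
  rewrite lef_pV2 ?posrE ?dg_gt0 //; by rewrite /dg ler_nat.
rewrite (bigD1 i0) //=.
have : \sum_(i | i != i0) (dg i)^-1 <= \sum_(i | i != i0) 1 by apply: ler_sum => i _; apply: Le1.
rewrite sumr_const cardC1 card_ord.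
have -> : (n%:R : R) = (1 *+ n.-1) + 1.
  by rewrite natr1 prednK // ltnW.
lra.
Qed.

Lemma alg_final (t s : R) : 2 <= t -> 0 <= s -> 1 <= t * s -> t * s ^+ 2 < 1 ->
  (1 + s)^-1 + (t - 1) ^+ 2 / (t - s) <=
  t / 2 + (t - 1) ^+ 2 / (2 * (t + 1) * (1 - t * s ^+ 2)).
Proof.
move=> t2 s0 ts1 ts2.
have s1 : s < 1.
  have : s ^+ 2 < 1 by nra.
  nra.
pose F := (t ^+ 2 - t + 2) + (t ^+ 3 - 4 * t + 1) * s + (t ^+ 3 - 2 * t ^+ 2 - 2 * t + 1) * s ^+ 2
   + t * (t + 1) * s ^+ 3.
have F0 : 0 <= F.
  have h1 : 0 <= (t ^+ 3 - 4 * t + 1) * s.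
    apply: mulr_ge0 => //.
    have : 0 <= t * (t - 2) * (t + 2) by rewrite !mulr_ge0 //; lra.
    move=> h; rewrite -subr_ge0; apply: le_trans h _; rewrite -subr_ge0.
    have -> : t ^+ 3 - 4 * t + 1 - 0 - t * (t - 2) * (t + 2) = 1 by ring.
    by [].
  have h2 : 0 <= t ^+ 2 * (t - 2) * s ^+ 2 by rewrite !mulr_ge0 ?sqr_ge0 //; lra.
  have h3 : 0 <= t * (t + 1) * s ^+ 3 by rewrite !mulr_ge0 ?exprn_ge0 //; lra.
  have h4 : 0 <= s ^+ 2 by apply: sqr_ge0.
  have -> : F = (t ^+ 2 - t + 2) + (t ^+ 3 - 4 * t + 1) * s + t ^+ 2 * (t - 2) * s ^+ 2
     - 2 * (t * s ^+ 2) + s ^+ 2 + t * (t + 1) * s ^+ 3 by rewrite /F; ring.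
  nra.
have A1 : 0 < 1 + s by lra.
have A2 : 0 < t - s by lra.
have A3 : 0 < t + 1 by lra.
have A4 : 0 < 1 - t * s ^+ 2 by lra.
rewrite -subr_ge0.
have -> : t / 2 + (t - 1) ^+ 2 / (2 * (t + 1) * (1 - t * s ^+ 2)) - ((1 + s)^-1 + (t - 1) ^+ 2 / (t - s))
   = (t * s - 1) * F / (2 * (t + 1) * (1 - t * s ^+ 2) * (1 + s) * (t - s)).
  rewrite /F; field.
  by rewrite !gt_eqF.
apply: divr_ge0; first by apply: mulr_ge0 => //; lra.
by rewrite !mulr_ge0 //; lra.
Qed.

Lemma main_thm : let N : R := n%:R in
  let sigma : R := Num.sqrt (sigma2 R e) in
  let s : R := sigma / Num.sqrt (N - 1) in
  N * ((1 + s)^-1 + (N - 2) ^+ 2 / (N - 1 - s)) + (N - 1) ^+ 2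
    <= add_deg_kirchhoff R e.
Proof.
cbv zeta.
set N : R := n%:R.
set sigma := Num.sqrt (sigma2 R e).
set s := sigma / Num.sqrt (N - 1).
rewrite Rplus_id -/Kc.
have P2 := PhiII.
suff KB : (1 + s)^-1 + (N - 2) ^+ 2 / (N - 1 - s) <= Kc.
  have N0 : 0 <= N by rewrite ler0n.
  have := ler_wpM2l N0 KB.
  rewrite /N in P2 *; lra.
have Tv := Tp_sigma.
have L := Tp_low.
rewrite -/N in Tv L.
have [n3|n2] := leqP 3 n.
  have TH := Tp_high n3.
  rewrite -/N in TH.
  have N3 : 3 <= N by rewrite /N (ler_nat R 3 n).
  set t := N - 1.
  have Nt : N = t + 1 by rewrite /t; ring.
  rewrite Nt in Tv L TH.
  have t2 : 2 <= t by rewrite /t; lra.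
  have v1 : (sigma2 R e) < 1 by nra.
  have vt : 1 <= t * (sigma2 R e) by nra.
  have v0 : 0 <= (sigma2 R e) by nra.
  have t0 : 0 <= t by lra.
  have s0 : 0 <= s by rewrite /s divr_ge0 ?sqrtr_ge0.
  have s2 : t * s ^+ 2 = (sigma2 R e).
    rewrite /s /sigma expr_div_n !sqr_sqrtr //.
    rewrite -/t; move: (sigma2 R e) => w; field.
    by rewrite gt_eqF //; lra.
  have ts1 : 1 <= t * s.
    have E : (t * s) ^+ 2 = t * (t * s ^+ 2) by ring.
    have : 1 <= (t * s) ^+ 2 by rewrite E s2.
    have : 0 <= t * s by rewrite mulr_ge0.
    nra.
  have ts2 : t * s ^+ 2 < 1 by rewrite s2.
  have AF := alg_final t2 s0 ts1 ts2.
  have -> : N - 2 = t - 1 by rewrite Nt; ring.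
  apply: (le_trans AF).
  pose c := (t + 1) * (1 - (sigma2 R e)) / (t - 1).
  have c0 : 0 < c by rewrite /c divr_gt0 ?mulr_gt0 //; lra.
  have KB := Kbound c.
  rewrite -/N Nt Tv in KB.
  have B2 : (t + 1) * (1 - c) ^+ 2 - c ^+ 2 + (t + 1) * (sigma2 R e) - 2 * (t + 1) + 4 * c * t =
      2 * c ^+ 2 * (t / 2 + (t - 1) ^+ 2 / (2 * (t + 1) * (1 - t * s ^+ 2))).
    rewrite s2 /c; field.
    by rewrite !gt_eqF //; lra.
  have c2 : 0 < 2 * c ^+ 2 by rewrite mulr_gt0 ?exprn_gt0.
  rewrite -(ler_pM2l c2) -B2.
  have E1 : t + 1 - 1 = t by ring.
  rewrite E1 in KB.
  lra.
have n2' : n = 2%N by apply/eqP; rewrite eqn_leq -ltnS n2 Hn.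
have N2 : N = 2 by rewrite /N n2'.
rewrite N2 in Tv L *.
have v1 : 1 <= (sigma2 R e) by lra.
have -> : (2 : R) - 2 = 0 by ring.
rewrite expr0n /= mul0r addr0.
have s1 : 1 <= s.
  rewrite /s /sigma N2 (_ : (2 : R) - 1 = 1); last by ring.
  by rewrite sqrtr1 divr1 -sqrtr1 ler_sqrt //; lra.
have KB := Kbound 1.
rewrite -/N N2 Tv in KB.
have Kh : 2^-1 <= Kc.
  have : 1 <= 2 * Kc by lra.
  move=> h; rewrite -(ler_pM2l (_ : (0 : R) < 2)) ?mulfV //; lra.
apply: le_trans Kh.
by rewrite lef_pV2 ?posrE; lra.
Qed.
End G.

Theorem theorem5 (R : rcfType) (n : nat) (e : rel 'I_n)
  (Hn : (2 <= n)%N) (Hsimple : simple_graph e) (Hconn : connected_graph e) :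
  let N : R := n%:R in
  let sigma : R := Num.sqrt (sigma2 R e) in
  let s : R := sigma / Num.sqrt (N - 1) in
  N * ((1 + s)^-1 + (N - 2) ^+ 2 / (N - 1 - s)) + (N - 1) ^+ 2
    <= add_deg_kirchhoff R e.
Proof.
case: Hsimple => Hsym Hirr.
exact: (@main_thm R n e Hsym Hirr Hconn Hn).
Qed.
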